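(* For $n \ge 3$, if $n \pmod 6 \notin \{2,4\}$, then the path $P_n$ is not $\gamma_{\rm tg}$-critical.
   Context: Total domination game: Dominator and Staller alternately choose vertices, each chosen vertex must be adjacent to some vertex not yet totally dominated; the game ends when no legal move exists; Dominator minimizes, Staller maximizes the number of moves; $\gamma_{\rm tg}(G)$ is the number of moves in the Dominator-start game under optimal play. $G|v$ is $G$ with $v$ declared already totally dominated, with $\gamma_{\rm tg}(G|v)$ defined analogously. $G$ is $\gamma_{\rm tg}$-critical if $\gamma_{\rm tg}(G|v)<\gamma_{\rm tg}(G)$ for all vertices $v$. *)

(* Defs.v *)
From mathcomp Require Import all_boot.
Set Implicit Arguments. Unset Strict Implicit. Unset Printing Implicit Defensive.

(* A simple graph is a symmetric irreflexive relation [e] on a finite type [T]. *)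
Section TotalDominationGame.
Variables (T : finType) (e : rel T).

Definition nbhd (u : T) : {set T} := [set w | e u w].

(* D = set of vertices already totally dominated.  A vertex u is a legal
   move iff it is adjacent to some vertex not yet totally dominated. *)
Definition legal (D : {set T}) (u : T) : bool := [exists w, e u w && (w \notin D)].

(* Value (number of remaining moves under optimal play) of the game from
   position D, with Dominator to move iff [dom]; [k] is fuel (every legal
   move strictly enlarges D, so fuel #|T|.+1 is never exhausted). *)
Fixpoint game_value (k : nat) (D : {set T}) (dom : bool) : nat :=
  match k with
  | 0 => 0
  | k'.+1 =>
    let vals := [seq (game_value k' (D :|: nbhd u) (~~ dom)).+1
                | u <- enum T & legal D u] in
    if vals is v0 :: _ then
      (if dom then foldr minn v0 vals else foldr maxn v0 vals)
    else 0
  end.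

Definition gamma_tg : nat := game_value #|T|.+1 set0 true.

Definition gamma_tg_at (v : T) : nat := game_value #|T|.+1 [set v] true.

Definition gamma_tg_critical : Prop := forall v : T, gamma_tg_at v < gamma_tg.

End TotalDominationGame.

Definition path_rel (n : nat) : rel 'I_n :=
  fun i j => (i.+1 == j :> nat) || (j.+1 == i :> nat).
Arguments path_rel n : clear implicits.

(* Main.v *)
Require Import Defs.
From mathcomp Require Import all_boot zify.
Set Implicit Arguments. Unset Strict Implicit. Unset Printing Implicit Defensive.

Definition piece := (nat * bool * bool)%type.
Definition pc (k : nat) (l r : bool) : seq piece := if k is 0 then [::] else [:: (k, l, r)].

Fixpoint pcs (l : bool) (k : nat) (c : seq bool) (ro : bool) : seq piece :=
  match c with
  | [::] => pc k l ro
  | b :: c' => if b then pc k l true ++ pcs true 0 c' ro else pcs l k.+1 c' ro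
  end.

Definition wt (k : nat) := (k * 2 + 1) %/ 3.
Definition cnt (p : piece) : bool := (p.1.1 %% 3 == 2) && (p.1.2 || p.2).
Definition Ws (s : seq piece) := sumn [seq wt p.1.1 | p <- s].
Definition Ms (s : seq piece) := count cnt s.

Lemma Ws_cat s t : Ws (s ++ t) = Ws s + Ws t.
Proof. by rewrite /Ws map_cat sumn_cat. Qed.
Lemma Ms_cat s t : Ms (s ++ t) = Ms s + Ms t.
Proof. by rewrite /Ms count_cat. Qed.
Lemma Ws_pc k l r : Ws (pc k l r) = wt k.
Proof. by case: k => [|k] //; rewrite /Ws /Ms /= ?addn0. Qed.
Lemma Ms_pc k l r : Ms (pc k l r) = cnt (k, l, r).
Proof. by case: k => [|k] //; rewrite /Ws /Ms /= ?addn0. Qed.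

Lemma pcs_nseq l k a c ro : pcs l k (nseq a false ++ c) ro = pcs l (k + a) c ro.
Proof. elim: a k => [|a IH] k /=; first by rewrite addn0. by rewrite IH addSnnS. Qed.

Lemma pcs_cat_true l k X Y ro :
  pcs l k (X ++ true :: Y) ro = pcs l k X true ++ pcs true 0 Y ro.
Proof.
elim: X l k => [|b X IH] l k //=.
case: b => //; by rewrite IH catA.
Qed.

Lemma pcs_split lo X Z Y ro : last true X -> head true Y ->
  pcs lo 0 (X ++ Z ++ Y) ro =
  pcs lo 0 X true ++ pcs ((X != [::]) || lo) 0 Z ((Y != [::]) || ro) ++ pcs true 0 Y ro.
Proof.
move=> hX hY.
have HY : forall l, pcs l 0 (Z ++ Y) ro = pcs l 0 Z ((Y != [::]) || ro) ++ pcs true 0 Y ro.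
  move=> l; case: Y hY => [|y Y] /= hy; first by rewrite !cats0.
  by rewrite hy pcs_cat_true.
case/lastP: X hX => [|X x] /=; first by rewrite HY.
rewrite last_rcons => -> /=.
rewrite -cats1 -catA /= pcs_cat_true HY.
have -> : pcs lo 0 (X ++ [:: true]) true = pcs lo 0 X true.
  by rewrite pcs_cat_true /= cats0.
by case: X.
Qed.

Lemma pcs_one lo i j ro : pcs lo 0 (nseq i false ++ true :: nseq j false) ro = pc i lo true ++ pc j true ro.
Proof.
rewrite pcs_nseq add0n /= -[nseq j false]cats0 pcs_nseq.
by [].
Qed.

Lemma pcs_nseq0 lo a ro : pcs lo 0 (nseq a false) ro = pc a lo ro.
Proof. by rewrite -[nseq a false]cats0 pcs_nseq. Qed.

Fixpoint gm (c : seq bool) (g : nat) : seq bool :=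
  match c with
  | [::] => [::]
  | x :: c' => match g with 0 => true :: c' | 1 => true :: gm c' 0 | g'.+2 => x :: gm c' g'.+1 end
  end.

Lemma size_gm c g : size (gm c g) = size c.
Proof. by elim: c g => [|x c IH] [|[|g]] //=; rewrite IH. Qed.

Lemma nth_gm c g i : i < size c -> nth true (gm c g) i = nth true c i || (i.+1 == g) || (i == g).
Proof.
elim: c g i => [|x c IH] g i; first by [].
move=> /= Hi.
case: g => [|[|g]]; case: i Hi => [|i] Hi /=; rewrite ?orbT ?orbF //; rewrite ?IH //.
by rewrite eqSS; case: (nth true c i); clear Hi; case: i.
Qed.

Lemma gm_small X g : size X < g -> gm X g = X.
Proof.
elim: X g => [|x X IH] [|[|g]] //= H.
by rewrite IH.
Qed.

Lemma gm_cat X Z g : size X <= g -> gm (X ++ Z) g = gm X g ++ gm Z (g - size X).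
Proof.
elim: X g => [|x X IH] g /=; first by rewrite subn0.
case: g => [|[|g]] //= H.
- by case: X IH H => //.
- by rewrite IH.
Qed.

Lemma gm_cat_lt X Z g : g < size X -> gm (X ++ Z) g = gm X g ++ Z.
Proof.
elim: X g => [|x X IH] g //=.
case: g => [|[|g]] //= H.
- by rewrite IH.
- by rewrite IH.
Qed.

Lemma gm_last X : last true X -> gm X (size X) = X.
Proof.
elim: X => [|x X IH] //=.
case: X IH => [|y X] IH /=; first by move=> ->.
by move=> H; have := IH H; rewrite /= => ->.
Qed.

Lemma gm_head Y : head true Y -> gm Y 0 = Y.
Proof. by case: Y => [|y Y] //= ->. Qed.

Lemma pcs_gm_nseq l k a h r : 0 < a -> h <= a ->
  pcs l k (gm (nseq a false) h) r = pc (k + h.-1) l true ++ pc (a - h.+1) true r.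
Proof.
elim: h a k => [|[|h] IH] [|a] k //= _ Ha.
- by rewrite addn0 pcs_nseq0 subSS subn0.
- by case: a Ha => [|a] _; rewrite /= addn0 ?pcs_nseq0 ?subSS ?subn0.
- rewrite IH ?subSS ?addSnnS //; lia.
Qed.

Lemma split_right (Y0 : seq bool) : exists a Y, Y0 = nseq a false ++ Y /\ head true Y.
Proof.
elim: Y0 => [|y Y0 [a [Y [-> HY]]]]; first by exists 0, [::].
case: y; first by exists 0, (true :: nseq a false ++ Y).
by exists a.+1, Y.
Qed.

Lemma split_left (X0 : seq bool) : exists X a, X0 = X ++ nseq a false /\ last true X.
Proof.
elim/last_ind: X0 => [|X0 x [X [a [-> HX]]]]; first by exists [::], 0.
case: x; first by exists (rcons (X ++ nseq a false) true), 0; rewrite cats0 last_rcons.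
exists X, a.+1; split => //.
by rewrite -cats1 -catA /= -[false :: _]/(nseq 1 false) -nseqD addn1.
Qed.

Lemma nth_run X a Y j : size X <= j < size X + a -> nth true (X ++ nseq a false ++ Y) j = false.
Proof.
move=> /andP [H1 H2].
have H3 : j - size X < a by lia.
by rewrite nth_cat ltnNge H1 /= nth_cat size_nseq H3 nth_nseq H3.
Qed.

Lemma decomp c q : q < size c -> nth true c q = false ->
  exists X a Y, c = X ++ nseq a false ++ Y /\ last true X /\ head true Y /\ size X <= q < size X + a.
Proof.
move=> Hq Hn.
have Hd : drop q c = false :: drop q.+1 c.
  by rewrite (drop_nth true Hq) Hn.
have [X [a1 [HX HXl]]] := split_left (take q c).
have [a2 [Y [HY HYh]]] := split_right (drop q.+1 c).
exists X, (a1 + a2).+1, Y; split; last split => //; last split => //.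
  rewrite -(cat_take_drop q c) HX Hd HY -catA; congr (_ ++ _).
  by rewrite -addnS nseqD -catA.
have : size (take q c) = q by rewrite size_take Hq.
rewrite HX size_cat size_nseq => <-; lia.
Qed.

Definition glegal (c : seq bool) g := exists j, j < size c /\ nth true c j = false /\ (j.+1 = g \/ j = g).

Lemma core lo ro X a Y h : last true X -> head true Y -> 0 < a -> h <= a ->
  let lf := (X != [::]) || lo in let rf := (Y != [::]) || ro in
  let c := X ++ nseq a false ++ Y in
  [/\ pcs lo 0 c ro = pcs lo 0 X true ++ pc a lf rf ++ pcs true 0 Y ro,
      pcs lo 0 (gm c (size X + h)) ro =
        pcs lo 0 X true ++ (pc h.-1 lf true ++ pc (a - h.+1) true rf) ++ pcs true 0 Y ro
    & glegal c (size X + h)].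
Proof.
move=> HX HY Ha Hh lf rf c; split.
- by rewrite /c pcs_split // pcs_nseq0.
- have -> : gm c (size X + h) = X ++ gm (nseq a false) h ++ Y.
    rewrite /c gm_cat ?leq_addr // addKn.
    have -> : gm X (size X + h) = X.
      case: h Hh => [|h] Hh; first by rewrite addn0 gm_last.
      by rewrite gm_small // addnS ltnS leq_addr.
    case: (ltngtP h a) Hh => // [Hlt|Heq] _.
      by rewrite gm_cat_lt ?size_nseq.
    by rewrite gm_cat ?size_nseq ?Heq ?leqnn // subnn gm_head.
  by rewrite pcs_split // pcs_gm_nseq.
- case: (ltngtP h a) Hh => // [Hlt|Heq] _.
    exists (size X + h); split; last split; last by right.
      rewrite /c !size_cat size_nseq; lia.
    rewrite /c nth_run //; lia.
  exists (size X + h).-1; split; last split; last by left; lia.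
    rewrite /c !size_cat size_nseq; lia.
  rewrite /c nth_run //; lia.
Qed.

Definition W1 a h := wt h.-1 + wt (a - h.+1).
Definition M1 a lf rf h : nat := cnt (h.-1, lf, true) + cnt (a - h.+1, true, rf).
Definition okmv a lf rf h := [&& h <= a, lf || (0 < h) & rf || (h < a)].

Lemma num_univ a lf rf h : 0 < a -> okmv a lf rf h ->
  let W0 := wt a in let M0 : nat := cnt (a, lf, rf) in
  let w1 := W1 a h in let m1 := M1 a lf rf h in
  (w1 + 2 = W0 /\ m1 = M0 + 2) \/ (w1 + 1 = W0 /\ m1 = M0) \/ (w1 + 1 = W0 /\ m1 = M0 + 1) \/
  (w1 + 2 = W0 /\ m1 = M0 + 1) \/ (w1 + 1 = W0 /\ m1 + 1 = M0) \/ (w1 = W0 /\ m1 + 1 = M0).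
Proof.
rewrite /okmv /W1 /M1 /cnt /wt /= !orbT !andbT => Ha.
move=> /and3P [H1 H2 H3]; case: lf rf H2 H3 => [] [] /= H2 H3;
case: (h.-1 %% 3 =P 2); case: ((a - h.+1) %% 3 =P 2); try case: (a %% 3 =P 2); move=> /= *; lia.
Qed.

Ltac fin := repeat (first [ done | lia | (apply/andP; split) | split | (apply/orP; right; lia) | (apply/orP; left; done) ]).

Lemma num_ex1 a lf rf : cnt (a, lf, rf) ->
  exists h, okmv a lf rf h /\ W1 a h + 1 = wt a /\ M1 a lf rf h + 1 = cnt (a, lf, rf).
Proof.
rewrite /cnt /= => /andP [/eqP Ha Hl].
exists 1; rewrite /okmv /W1 /M1 /cnt /wt /= Ha Hl ?orbT /= ?andbT.
case: ((a - 2) %% 3 =P 2) => /=; first by lia.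
move=> _; fin.
Qed.

Lemma num_ex2 a lf rf : cnt (a, lf, rf) ->
  exists h, okmv a lf rf h /\ W1 a h = wt a /\ M1 a lf rf h + 1 = cnt (a, lf, rf).
Proof.
rewrite /cnt /= => /andP [/eqP Ha Hl].
case: lf Hl => /= Hl.
  exists 0; rewrite /okmv /W1 /M1 /cnt /wt /= Ha ?orbT /= andbT subn1.
  case: (a.-1 %% 3 =P 2) => /=; first by lia.
  move=> _; fin.
exists a; rewrite /okmv /W1 /M1 /cnt /wt /= Ha Hl ?orbT /= ?andbT.
have -> : a - a.+1 = 0 by lia.
case: (a.-1 %% 3 =P 2) => /=; first by lia.
move=> _; fin.
Qed.

Lemma num_ex3 a lf rf : 0 < a -> lf || rf || (2 <= a) -> ~~ cnt (a, lf, rf) ->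
  exists h, okmv a lf rf h /\ W1 a h + 1 = wt a /\ M1 a lf rf h = cnt (a, lf, rf).
Proof.
rewrite /cnt /= => Ha0 Hf Hc.
have [H1|H1] := eqVneq (a %% 3) 1.
  have [Ha1|Ha1] := eqVneq a 1.
    subst a; case: lf Hc Hf => /= Hc Hf.
      by exists 0; rewrite /okmv /W1 /M1 /cnt /wt /=; fin.
    by exists 1; move: Hf; rewrite /okmv /W1 /M1 /cnt /wt /= ?orbF => ->; fin.
  exists 2; rewrite /okmv /W1 /M1 /cnt /wt /= ?orbT /= ?andbT.
  case: ((a - 3) %% 3 =P 2) => /=; first by lia.
  move=> _; rewrite (negbTE Hc); fin.
exists 1; rewrite /okmv /W1 /M1 /cnt /wt /= ?orbT /= ?andbT.
move/eqP: H1 => H1.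
case: ((a - 2) %% 3 =P 2) => /= H2; first by lia.
rewrite (negbTE Hc); fin.
Qed.

Lemma class_step lo ro X a Y h : last true X -> head true Y -> 0 < a ->
  okmv a ((X != [::]) || lo) ((Y != [::]) || ro) h ->
  [/\ glegal (X ++ nseq a false ++ Y) (size X + h),
     (size X + h = 0 -> lo), (size X + h = size (X ++ nseq a false ++ Y) -> ro),
     Ws (pcs lo 0 (gm (X ++ nseq a false ++ Y) (size X + h)) ro) + wt a
       = Ws (pcs lo 0 (X ++ nseq a false ++ Y) ro) + W1 a h &
     Ms (pcs lo 0 (gm (X ++ nseq a false ++ Y) (size X + h)) ro) + cnt (a, (X != [::]) || lo, (Y != [::]) || ro)
       = Ms (pcs lo 0 (X ++ nseq a false ++ Y) ro) + M1 a ((X != [::]) || lo) ((Y != [::]) || ro) h].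
Proof.
move=> HX HY Ha /and3P [H1 H2 H3].
have [E1 E2 E3] := core lo ro HX HY Ha H1.
split => //.
- case: X HX E1 E2 E3 H2 => [|x X] //= _ _ _ _ H2 Hg.
  have Hh : h = 0 by lia.
  by move: H2; rewrite Hh orbF.
- rewrite !size_cat size_nseq => Hg.
  have Hh : h = a by lia.
  have HYn : Y = [::] by case: Y HY {E1 E2 E3} H3 Hg => //= y Y _ _; lia.
  by move: H3; rewrite HYn Hh ltnn /= orbF.
- rewrite E2 E1 !Ws_cat !Ws_pc /W1; lia.
- rewrite E2 E1 !Ms_cat !Ms_pc /M1; lia.
Qed.

Lemma pcs_mem_decomp lo ro c p : p \in pcs lo 0 c ro ->
  exists X a Y, [/\ c = X ++ nseq a false ++ Y, last true X, head true Y, 0 < a &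
                  p = (a, (X != [::]) || lo, (Y != [::]) || ro)].
Proof.
elim: (size c).+1 {-2}c (ltnSn (size c)) lo => // N IH c0 Hc lo.
have [a0 [Y0 [E HY0]]] := split_right c0; subst c0.
case: Y0 HY0 Hc => [|y Y1] /= HY0 Hc.
  rewrite cats0 pcs_nseq0; case: a0 Hc => [|a0] //= _.
  rewrite inE => /eqP ->.
  by exists [::], a0.+1, [::]; rewrite cats0.
rewrite HY0 pcs_nseq add0n /= mem_cat => /orP [].
  case: a0 Hc => [|a0] //= _; rewrite inE => /eqP ->.
  by exists [::], a0.+1, (true :: Y1).
move=> Hp.
have Hs : size Y1 < N by move: Hc; rewrite size_cat /=; lia.
have [X [a [Y [E1 E2 E3 E4 E5]]]] := IH Y1 Hs true Hp.
exists (nseq a0 false ++ true :: X), a, Y; split => //.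
- by rewrite E1 -catA.
- by rewrite last_cat.
- by rewrite E5 /= orbT; case: (nseq a0 false).
Qed.

Lemma class_univ (lo ro : bool) c g : glegal c g -> (g = 0 -> lo) -> (g = size c -> ro) ->
  exists a lf rf h, [/\ 0 < a, okmv a lf rf h,
    Ws (pcs lo 0 (gm c g) ro) + wt a = Ws (pcs lo 0 c ro) + W1 a h &
    Ms (pcs lo 0 (gm c g) ro) + cnt (a, lf, rf) = Ms (pcs lo 0 c ro) + M1 a lf rf h].
Proof.
move=> [j [Hj [Hn Hg]]] Hlo Hro.
have [X [a [Y [E [HX [HY Hr]]]]]] := decomp Hj Hn; subst c; clear Hn Hj.
have Ha : 0 < a by lia.
have Hgh : g = size X + (g - size X) by lia.
have Hok : okmv a ((X != [::]) || lo) ((Y != [::]) || ro) (g - size X).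
  apply/and3P; split; first by lia.
  - case: X HX Hr Hgh Hro => [|x X] //= _ Hr Hgh Hro.
    case: lo Hlo => //= Hlo.
    have : g != 0 by apply/eqP => /Hlo.
    lia.
  - case: Y HY Hr Hgh Hro => [|y Y] //= _ Hr Hgh Hro.
    case: ro Hro => //= Hro.
    have : g != size (X ++ nseq a false ++ [::]) by apply/eqP => /Hro.
    rewrite !size_cat size_nseq /=; lia.
have [S1 S2 S3 S4 S5] := class_step HX HY Ha Hok.
exists a, ((X != [::]) || lo), ((Y != [::]) || ro), (g - size X); split => //.
- by rewrite {1}Hgh.
- by rewrite {1}Hgh.
Qed.

Lemma class_ex (lo ro : bool) c p : p \in pcs lo 0 c ro -> (lo || ro || (2 <= size c)) ->
  [/\ 0 < p.1.1, p.1.2 || p.2 || (2 <= p.1.1) &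
   forall h, okmv p.1.1 p.1.2 p.2 h -> exists g, [/\ glegal c g, (g = 0 -> lo), (g = size c -> ro),
     Ws (pcs lo 0 (gm c g) ro) + wt p.1.1 = Ws (pcs lo 0 c ro) + W1 p.1.1 h &
     Ms (pcs lo 0 (gm c g) ro) + cnt p = Ms (pcs lo 0 c ro) + M1 p.1.1 p.1.2 p.2 h]].
Proof.
move=> Hp Hs.
have [X [a [Y [E HX HY Ha Ep]]]] := pcs_mem_decomp Hp; clear Hp; subst c p => /=.
split => //.
- case: X HX Hs => [|x X] //= _; case: Y HY => [|y Y] //= _; rewrite ?cats0 ?size_nseq ?orbT //.
- move=> h Hok; have [S1 S2 S3 S4 S5] := class_step HX HY Ha Hok.
  by exists (size X + h).
Qed.


Lemma foldr_minn_eq (s : seq nat) v0 y : v0 \in s -> y \in s ->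
  (forall x, x \in s -> y <= x) -> foldr minn v0 s = y.
Proof.
move=> Hv Hy Hall.
have le1 : forall x, x \in s -> foldr minn v0 s <= x.
  elim: s {Hv Hy Hall} => [|a s IH] x //=; rewrite inE => /orP [/eqP ->|Hx].
    exact: geq_minl.
  by rewrite geq_min IH ?orbT.
have le2 : y <= foldr minn v0 s.
  have Hv0 := Hall _ Hv.
  elim: s Hall {Hv Hy le1} => [|a s IH] Hall //=.
  rewrite leq_min Hall ?inE ?eqxx //= IH // => x Hx.
  by apply: Hall; rewrite inE Hx orbT.
by apply/eqP; rewrite eqn_leq le2 le1.
Qed.

Lemma foldr_maxn_eq (s : seq nat) v0 y : v0 \in s -> y \in s ->
  (forall x, x \in s -> x <= y) -> foldr maxn v0 s = y.
Proof.
move=> Hv Hy Hall.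
have le1 : forall x, x \in s -> x <= foldr maxn v0 s.
  elim: s {Hv Hy Hall} => [|a s IH] x //=; rewrite inE => /orP [/eqP ->|Hx].
    exact: leq_maxl.
  by rewrite leq_max IH ?orbT.
have le2 : foldr maxn v0 s <= y.
  have Hv0 := Hall _ Hv.
  elim: s Hall {Hv Hy le1} => [|a s IH] Hall //=.
  rewrite geq_max Hall ?inE ?eqxx //= IH // => x Hx.
  by apply: Hall; rewrite inE Hx orbT.
by apply/eqP; rewrite eqn_leq le2 le1.
Qed.

Lemma legal_card (T : finType) (e : rel T) D u : legal e D u ->
  #|~: (D :|: nbhd e u)| < #|~: D|.
Proof.
move=> /existsP [w /andP [Hw HwD]].
apply: proper_card; apply/properP; split.
  by rewrite setCS subsetUl.
exists w; first by rewrite in_setC.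
by rewrite in_setC negbK in_setU /nbhd inE Hw orbT.
Qed.

Lemma gv_char (T : finType) (e : rel T) (f : {set T} -> bool -> nat) :
  (forall D dom, (forall u, ~~ legal e D u) -> f D dom = 0) ->
  (forall D u, legal e D u -> f D true <= (f (D :|: nbhd e u) false).+1 /\
                              (f (D :|: nbhd e u) true).+1 <= f D false) ->
  (forall D, (exists u, legal e D u) ->
     (exists u, legal e D u /\ f D true = (f (D :|: nbhd e u) false).+1) /\
     (exists u, legal e D u /\ f D false = (f (D :|: nbhd e u) true).+1)) ->
  forall k D dom, #|~: D| < k -> game_value e k D dom = f D dom.
Proof.
move=> H0 H1 H2; elim=> [|k IH] D dom Hk //=.
set vals := [seq _ | u <- _].
have Hv : forall x, x \in vals -> exists u, legal e D u /\ x = (f (D :|: nbhd e u) (~~ dom)).+1.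
  move=> x /mapP [u]; rewrite mem_filter mem_enum andbT => Hu ->.
  exists u; split => //; rewrite IH //.
  have := legal_card Hu; lia.
have Hv' : forall u, legal e D u -> (f (D :|: nbhd e u) (~~ dom)).+1 \in vals.
  move=> u Hu; apply/mapP; exists u; first by rewrite mem_filter mem_enum Hu.
  rewrite IH //; have := legal_card Hu; lia.
clearbody vals; case E: vals => [|v0 vs].
  rewrite H0 // => u; apply/negP => Hu.
  by have := Hv' u Hu; rewrite E.
have Hl : exists u, legal e D u.
  have := mem_head v0 vs; rewrite -E => /Hv [u [Hu _]]; by exists u.
have [[u1 [Hu1 E1]] [u2 [Hu2 E2]]] := H2 D Hl.
rewrite -E; case: dom Hv Hv' => Hv Hv'.
  apply: foldr_minn_eq; first by rewrite E mem_head.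
    by rewrite E1; apply: Hv'.
  by move=> x /Hv [u [Hu ->]]; have [] := H1 D u Hu.
apply: foldr_maxn_eq; first by rewrite E mem_head.
  by rewrite E2; apply: Hv'.
by move=> x /Hv [u [Hu ->]]; have [] := H1 D u Hu.
Qed.


Definition bit n (D : {set 'I_n}) i : bool := [exists x : 'I_n, (nat_of_ord x == i) && (x \in D)].
Definition ev n (D : {set 'I_n}) := mkseq (fun j => bit D (j * 2)) ((n + 1) %/ 2).
Definition od n (D : {set 'I_n}) := mkseq (fun j => bit D (j * 2 + 1)) (n %/ 2).
Definition PE n (D : {set 'I_n}) := pcs false 0 (ev D) (~~ odd n).
Definition PO n (D : {set 'I_n}) := pcs true 0 (od D) (odd n).
Definition WT n (D : {set 'I_n}) := Ws (PE D) + Ws (PO D).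
Definition MT n (D : {set 'I_n}) := Ms (PE D) + Ms (PO D).
Definition Phi n (D : {set 'I_n}) (dom : bool) :=
  WT D + (if dom then MT D %/ 2 else (MT D + 1) %/ 2).

Lemma bit_lt n (D : {set 'I_n}) i (Hi : i < n) : bit D i = (Ordinal Hi \in D).
Proof.
apply/existsP/idP => [[x /andP [/eqP Hx HxD]]|H].
  by have -> : Ordinal Hi = x by apply: val_inj => /=; rewrite Hx.
by exists (Ordinal Hi); rewrite eqxx H.
Qed.

Lemma bit_ge n (D : {set 'I_n}) i : n <= i -> bit D i = false.
Proof.
move=> Hi; apply/existsP => [[x /andP [/eqP Hx _]]].
by have := ltn_ord x; rewrite Hx; lia.
Qed.

Lemma bit_U n (D : {set 'I_n}) (u : 'I_n) i :
  bit (D :|: nbhd (path_rel n) u) i = bit D i || ((i < n) && ((u.+1 == i) || (i.+1 == u))).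
Proof.
case: (ltnP i n) => Hi.
  by rewrite !(bit_lt _ Hi) in_setU /nbhd inE /path_rel /= ?Hi.
by rewrite !bit_ge // andbF.
Qed.

Lemma ev_U n (D : {set 'I_n}) (u : 'I_n) :
  ev (D :|: nbhd (path_rel n) u) = if odd u then gm (ev D) (u.+1 %/ 2) else ev D.
Proof.
apply: (@eq_from_nth _ true).
  by case: ifP; rewrite ?size_gm /ev !size_mkseq.
move=> j; rewrite /ev size_mkseq => Hj.
case: ifP => Hu.
  rewrite nth_gm ?size_mkseq // !nth_mkseq // bit_U -orbA; congr (_ || _); lia.
rewrite !nth_mkseq // bit_U [X in _ || X](_ : _ = false) ?orbF //; lia.
Qed.

Lemma od_U n (D : {set 'I_n}) (u : 'I_n) :
  od (D :|: nbhd (path_rel n) u) = if odd u then od D else gm (od D) (u %/ 2).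
Proof.
apply: (@eq_from_nth _ true).
  by case: ifP; rewrite ?size_gm /od !size_mkseq.
move=> j; rewrite /od size_mkseq => Hj.
case: ifP => Hu.
  rewrite !nth_mkseq // bit_U [X in _ || X](_ : _ = false) ?orbF //; lia.
rewrite nth_gm ?size_mkseq // !nth_mkseq // bit_U -orbA; congr (_ || _); lia.
Qed.

Lemma legal_ev n (D : {set 'I_n}) (u : 'I_n) : odd u ->
  legal (path_rel n) D u <-> glegal (ev D) (u.+1 %/ 2).
Proof.
move=> Hu; split.
  move=> /existsP [w /andP [Hw HwD]].
  exists (w %/ 2); rewrite /ev size_mkseq nth_mkseq; last by have := ltn_ord w; lia.
  have Hw2 : w %/ 2 * 2 = w by move: Hw; rewrite /path_rel; lia.
  rewrite Hw2 (bit_lt D (ltn_ord w)) /=.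
  have -> : Ordinal (ltn_ord w) = w by apply: val_inj.
  rewrite (negbTE HwD); split; first by have := ltn_ord w; lia.
  split => //; move: Hw; rewrite /path_rel; lia.
move=> [j [Hj [Hn Hg]]].
move: Hj Hn; rewrite /ev size_mkseq => Hj; rewrite nth_mkseq // => Hn.
have Hjn : j * 2 < n by lia.
apply/existsP; exists (Ordinal Hjn); rewrite -bit_lt Hn andbT /path_rel /=; lia.
Qed.

Lemma legal_od n (D : {set 'I_n}) (u : 'I_n) : ~~ odd u ->
  legal (path_rel n) D u <-> glegal (od D) (u %/ 2).
Proof.
move=> Hu; split.
  move=> /existsP [w /andP [Hw HwD]].
  exists (w %/ 2); rewrite /od size_mkseq nth_mkseq; last by have := ltn_ord w; move: Hw; rewrite /path_rel; lia.
  have Hw2 : w %/ 2 * 2 + 1 = w by move: Hw; rewrite /path_rel; lia.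
  rewrite Hw2 (bit_lt D (ltn_ord w)) /=.
  have -> : Ordinal (ltn_ord w) = w by apply: val_inj.
  rewrite (negbTE HwD); split; first by have := ltn_ord w; move: Hw; rewrite /path_rel; lia.
  split => //; move: Hw; rewrite /path_rel; lia.
move=> [j [Hj [Hn Hg]]].
move: Hj Hn; rewrite /od size_mkseq => Hj; rewrite nth_mkseq // => Hn.
have Hjn : j * 2 + 1 < n by lia.
apply/existsP; exists (Ordinal Hjn); rewrite -bit_lt Hn andbT /path_rel /=; lia.
Qed.

Lemma phi_univ n (D : {set 'I_n}) (u : 'I_n) : legal (path_rel n) D u ->
  exists a lf rf h, [/\ 0 < a, okmv a lf rf h,
    WT (D :|: nbhd (path_rel n) u) + wt a = WT D + W1 a h &
    MT (D :|: nbhd (path_rel n) u) + cnt (a, lf, rf) = MT D + M1 a lf rf h].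
Proof.
move=> Hl; have Hun := ltn_ord u.
rewrite /WT /MT /PE /PO ev_U od_U.
case Hu: (odd u).
  have Hg := (legal_ev D Hu).1 Hl.
  have V1 : u.+1 %/ 2 = 0 -> false by move=> H; exfalso; lia.
  have V2 : u.+1 %/ 2 = size (ev D) -> ~~ odd n by rewrite /ev size_mkseq; lia.
  have [a [lf [rf [h [H1 H2 H3 H4]]]]] := class_univ Hg V1 V2.
  exists a, lf, rf, h; split => //; lia.
have Hg := (legal_od D (negbT Hu)).1 Hl.
have V2 : u %/ 2 = size (od D) -> odd n by rewrite /od size_mkseq; lia.
have [a [lf [rf [h [H1 H2 H3 H4]]]]] := class_univ (lo := true) Hg (fun _ => erefl) V2.
exists a, lf, rf, h; split => //; lia.
Qed.

Lemma phi_H1 n (D : {set 'I_n}) (u : 'I_n) : legal (path_rel n) D u ->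
  Phi D true <= (Phi (D :|: nbhd (path_rel n) u) false).+1 /\
  (Phi (D :|: nbhd (path_rel n) u) true).+1 <= Phi D false.
Proof.
move=> Hl; have [a [lf [rf [h [H1 H2 H3 H4]]]]] := phi_univ Hl.
have := num_univ H1 H2; rewrite /Phi; lia.
Qed.

Lemma glegal_pcs (lo ro : bool) c g : glegal c g -> exists p, p \in pcs lo 0 c ro.
Proof.
move=> [j [Hj [Hn _]]].
have [X [a [Y [E [HX [HY Hr]]]]]] := decomp Hj Hn; subst c; clear Hn Hj.
rewrite pcs_split // pcs_nseq0.
exists (a, (X != [::]) || lo, (Y != [::]) || ro).
by case: a Hr => [|a] Hr; [lia | rewrite !mem_cat inE eqxx orbT].
Qed.

Lemma piece_props n (D : {set 'I_n}) p : 3 <= n -> p \in PE D ++ PO D ->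
  0 < p.1.1 /\ p.1.2 || p.2 || (2 <= p.1.1).
Proof.
move=> Hn; rewrite mem_cat => /orP [] Hp.
  have Hs : false || ~~ odd n || (2 <= size (ev D)) by rewrite /ev size_mkseq; lia.
  by have [] := class_ex Hp Hs.
have Hs : true || odd n || (2 <= size (od D)) by [].
by have [] := class_ex Hp Hs.
Qed.

Lemma piece_move n (D : {set 'I_n}) p h : 3 <= n -> p \in PE D ++ PO D ->
  okmv p.1.1 p.1.2 p.2 h -> exists u, [/\ legal (path_rel n) D u,
    WT (D :|: nbhd (path_rel n) u) + wt p.1.1 = WT D + W1 p.1.1 h &
    MT (D :|: nbhd (path_rel n) u) + cnt p = MT D + M1 p.1.1 p.1.2 p.2 h].
Proof.
move=> Hn; rewrite mem_cat => /orP [] Hp Hok.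
  have Hs : false || ~~ odd n || (2 <= size (ev D)) by rewrite /ev size_mkseq; lia.
  have [_ _ Hex] := class_ex Hp Hs.
  have [g [[j [Hj [Hnth Hgj]]] G0 G1 G2 G3]] := Hex h Hok.
  move: Hj G1; rewrite {1}/ev size_mkseq => Hj G1.
  have Hg1 : 0 < g by case: g G0 {Hgj G1 G2 G3} => // /(_ erefl).
  have Hu : g * 2 - 1 < n.
    case: (ltnP g ((n + 1) %/ 2)) => Hg; first by lia.
    have : g = (n + 1) %/ 2 by lia.
    move=> /G1; lia.
  exists (Ordinal Hu).
  have Hodd : odd (Ordinal Hu) by rewrite /=; lia.
  have Hgu : (Ordinal Hu).+1 %/ 2 = g by rewrite /=; lia.
  split.
  - apply/(legal_ev D Hodd); rewrite Hgu; exists j; split => //.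
    by rewrite /ev size_mkseq.
  - by rewrite /WT /PE /PO ev_U od_U Hodd Hgu; lia.
  - by rewrite /MT /PE /PO ev_U od_U Hodd Hgu; lia.
have Hs : true || odd n || (2 <= size (od D)) by [].
have [_ _ Hex] := class_ex Hp Hs.
have [g [[j [Hj [Hnth Hgj]]] G0 G1 G2 G3]] := Hex h Hok.
move: Hj G1; rewrite {1}/od size_mkseq => Hj G1.
have Hu : g * 2 < n.
  case: (ltnP g (n %/ 2)) => Hg; first by lia.
  have : g = n %/ 2 by lia.
  move=> /G1; lia.
exists (Ordinal Hu).
have Hodd : ~~ odd (Ordinal Hu) by rewrite /=; lia.
have Hgu : (Ordinal Hu) %/ 2 = g by rewrite /=; lia.
split.
- apply/(legal_od D Hodd); rewrite Hgu; exists j; split => //.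
  by rewrite /od size_mkseq.
- by rewrite /WT /PE /PO ev_U od_U (negbTE Hodd) Hgu; lia.
- by rewrite /MT /PE /PO ev_U od_U (negbTE Hodd) Hgu; lia.
Qed.

Lemma MT_count n (D : {set 'I_n}) : MT D = count cnt (PE D ++ PO D).
Proof. by rewrite /MT /Ms count_cat. Qed.

Lemma phi_H2 n (D : {set 'I_n}) : 3 <= n -> (exists u, legal (path_rel n) D u) ->
  (exists u, legal (path_rel n) D u /\ Phi D true = (Phi (D :|: nbhd (path_rel n) u) false).+1) /\
  (exists u, legal (path_rel n) D u /\ Phi D false = (Phi (D :|: nbhd (path_rel n) u) true).+1).
Proof.
move=> Hn [u0 Hu0].
have [p0 Hp0] : exists p, p \in PE D ++ PO D.
  case Hu: (odd u0).
    have [p Hp] := glegal_pcs false (~~ odd n) ((legal_ev D Hu).1 Hu0).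
    by exists p; rewrite mem_cat /PE Hp.
  have [p Hp] := glegal_pcs true (odd n) ((legal_od D (negbT Hu)).1 Hu0).
  by exists p; rewrite mem_cat /PO Hp orbT.
case: (boolP (has cnt (PE D ++ PO D))) => [/hasP [p Hp Hc]|Hnc].
  move: (Hc); case: p Hp Hc => [[a lf] rf] Hp Hc Hc' /=.
  split.
    have [h [Hok [E1 E2]]] := num_ex1 Hc'.
    have [u [Hu F1 F2]] := piece_move Hn Hp Hok.
    exists u; split => //; move: F1 F2; rewrite /Phi /=; lia.
  have [h [Hok [E1 E2]]] := num_ex2 Hc'.
  have [u [Hu F1 F2]] := piece_move Hn Hp Hok.
  exists u; split => //; move: F1 F2; rewrite /Phi /=; lia.
have HM : MT D = 0 by rewrite MT_count; apply/eqP; rewrite -leqn0 leqNgt -has_count.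
have Hc0 : ~~ cnt p0 by move/hasPn: Hnc => /(_ p0 Hp0).
have [Ha Hf] := piece_props Hn Hp0.
move: Hp0 Hc0 Ha Hf; case: p0 => [[a lf] rf] /= Hp Hc Ha Hf.
have [h [Hok [E1 E2]]] := num_ex3 Ha Hf Hc.
have [u [Hu F1 F2]] := piece_move Hn Hp Hok.
move: F1 F2; rewrite /= HM => F1 F2.
split; exists u; split => //; rewrite /Phi HM; lia.
Qed.

Lemma phi_H0 n (D : {set 'I_n}) dom : 3 <= n -> (forall u, ~~ legal (path_rel n) D u) -> Phi D dom = 0.
Proof.
move=> Hn Hno.
case E: (PE D ++ PO D) => [|p s].
  have [E1 E2] : PE D = [::] /\ PO D = [::] by case: (PE D) E => //; case: (PO D).
  by rewrite /Phi /WT /MT E1 E2; case: dom.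
have Hp : p \in PE D ++ PO D by rewrite E mem_head.
have [Ha Hf] := piece_props Hn Hp.
have [h Hok] : exists h, okmv p.1.1 p.1.2 p.2 h.
  case: (boolP (cnt p)) => Hc.
    by move: Hc; case: p {E Hp Ha Hf} => [[a lf] rf] /= /num_ex1 [h [Hok _]]; exists h.
  by move: Hc Ha Hf; case: p {E Hp} => [[a lf] rf] /= Hc Ha Hf; have [h [Hok _]] := num_ex3 Ha Hf Hc; exists h.
have [u [Hu _ _]] := piece_move Hn Hp Hok.
by have := Hno u; rewrite Hu.
Qed.

Lemma gv_Phi n (D : {set 'I_n}) dom : 3 <= n ->
  game_value (path_rel n) #|'I_n|.+1 D dom = Phi D dom.
Proof.
move=> Hn; apply: gv_char.
- by move=> D' dom' H; apply: phi_H0.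
- by move=> D' u Hu; apply: phi_H1.
- by move=> D' H; apply: phi_H2.
- rewrite ltnS; exact: max_card.
Qed.


Lemma mkseq_false (f : nat -> bool) L : (forall j, f j = false) -> mkseq f L = nseq L false.
Proof.
move=> Hf; apply: (@eq_from_nth _ true); first by rewrite size_mkseq size_nseq.
by move=> j; rewrite size_mkseq => Hj; rewrite nth_mkseq // nth_nseq Hj Hf.
Qed.

Lemma mkseq_ind (f : nat -> bool) L t : t < L -> (forall j, f j = (j == t)) ->
  mkseq f L = nseq t false ++ true :: nseq (L - t.+1) false.
Proof.
move=> Ht Hf; apply: (@eq_from_nth _ true).
  rewrite size_mkseq size_cat /= !size_nseq; lia.
move=> j; rewrite size_mkseq => Hj; rewrite nth_mkseq // Hf nth_cat size_nseq.
case: (ltngtP j t) => H.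
- by rewrite nth_nseq H.
- have -> : j - t = (j - t.+1).+1 by lia.
  by rewrite /= nth_nseq; case: ifP => //; lia.
- by rewrite H subnn.
Qed.

Lemma bit_set0 n i : bit (set0 : {set 'I_n}) i = false.
Proof. by apply/existsP => [[x]]; rewrite in_set0 andbF. Qed.

Lemma bit_set1 n (v : 'I_n) i : bit [set v] i = (i == v).
Proof.
case: (ltnP i n) => Hi.
  by rewrite (bit_lt _ Hi) in_set1 -val_eqE.
rewrite bit_ge //; have := ltn_ord v; lia.
Qed.

Lemma Phi_set0 n : Phi (set0 : {set 'I_n}) true =
  wt ((n + 1) %/ 2) + wt (n %/ 2) + (cnt ((n + 1) %/ 2, false, ~~ odd n) + cnt (n %/ 2, true, odd n)) %/ 2.
Proof.
rewrite /Phi /WT /MT /PE /PO /ev /od.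
rewrite mkseq_false; last by move=> j; rewrite bit_set0.
rewrite mkseq_false; last by move=> j; rewrite bit_set0.
by rewrite !pcs_nseq0 !Ws_pc !Ms_pc.
Qed.

Lemma Phi_set1_even n (v : 'I_n) : ~~ odd v -> Phi [set v] true =
  wt (v %/ 2) + wt ((n + 1) %/ 2 - (v %/ 2).+1) + wt (n %/ 2) +
  (cnt (v %/ 2, false, true) + cnt ((n + 1) %/ 2 - (v %/ 2).+1, true, ~~ odd n) + cnt (n %/ 2, true, odd n)) %/ 2.
Proof.
move=> Hv; have Hvn := ltn_ord v.
rewrite /Phi /WT /MT /PE /PO /ev /od (@mkseq_ind _ _ (v %/ 2)); first last.
- by move=> j; rewrite bit_set1; lia.
- lia.
rewrite mkseq_false; last by move=> j; rewrite bit_set1; lia.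
rewrite pcs_one pcs_nseq0 !Ws_cat !Ms_cat !Ws_pc !Ms_pc.
lia.
Qed.

Lemma Phi_set1_odd n (v : 'I_n) : odd v -> Phi [set v] true =
  wt ((n + 1) %/ 2) + wt (v %/ 2) + wt (n %/ 2 - (v %/ 2).+1) +
  (cnt ((n + 1) %/ 2, false, ~~ odd n) + cnt (v %/ 2, true, true) + cnt (n %/ 2 - (v %/ 2).+1, true, odd n)) %/ 2.
Proof.
move=> Hv; have Hvn := ltn_ord v.
rewrite /Phi /WT /MT /PE /PO /ev /od (@mkseq_ind (fun j => bit [set v] (j * 2 + 1)) _ (v %/ 2)); first last.
- by move=> j; rewrite bit_set1; lia.
- lia.
rewrite mkseq_false; last by move=> j; rewrite bit_set1; lia.
rewrite pcs_one pcs_nseq0 !Ws_cat !Ms_cat !Ws_pc !Ms_pc.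
lia.
Qed.

Theorem lemma3p8 (n : nat) :
  3 <= n -> ~~ ((n %% 6 == 2) || (n %% 6 == 4)) ->
  ~ gamma_tg_critical (path_rel n).
Proof.
move=> Hn H6 Hc.
have Hv : (if n %% 6 == 0 then 2 else if n %% 6 == 1 then 3 else 0) < n.
  by case: ifP => H1; [lia | case: ifP => H2; lia].
have := Hc (Ordinal Hv); rewrite /gamma_tg_at /gamma_tg !gv_Phi // Phi_set0.
case: (boolP (odd (Ordinal Hv))) => Ho.
  rewrite Phi_set1_odd //= /wt /cnt /=; move: Ho => /=.
  by case: ifP => H1; [lia | case: ifP => H2; lia].
rewrite Phi_set1_even //= /wt /cnt /=; move: Ho => /=.
by case: ifP => H1; [lia | case: ifP => H2; lia].
Qed.
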